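(* Let $I$ be a set and $\mathcal{E}=(E_i)_{i\in I}$ a family of nonempty sets. Then there exists a choice of the sets $E_i$ (i.e. a family $\mathcal{E}=(E_i)_{i\in I}$ of nonempty sets) such that for every integral connective structure $\mathcal{K}$ on $I$ there exists a multiple relation $R$ in $\mathcal{E}$ whose connective structure satisfies $\mathcal{K}_R=\mathcal{K}$.
   Context: For $J\subseteq I$ let $Z_J=\prod_{j\in J}E_j$ (its elements, the $J$-families, are maps $x:J\to\bigcup_i E_i$ with $x_j\in E_j$; $Z_\emptyset=\{\bullet\}$). A multiple relation in $\mathcal{E}$ is a pair $R=(J_R,G_R)$ with $J_R\subseteq I$ (the domain) and $G_R\subseteq Z_{J_R}$ (the graph); write $x\in R$ for $x\in G_R$. For $K\subseteq J_R$ the restriction is $R_{|K}=(K,\{x_{|K}:x\in G_R\})$, where $x_{|K}$ is the restriction of the map $x$ to $K$. The product of relations is $R\bowtie S=(J_R\cup J_S,\{x\in Z_{J_R\cup J_S}: x_{|J_R}\in G_R,\ x_{|J_S}\in G_S\})$. A bipartition of a set $J$ is a pair $(K,L)$ of nonempty disjoint subsets with $K\cup L=J$. A relation $T$ is scindable (splittable) if there is a bipartition $(K,L)$ of $J_T$ and relations $R,S$ with $J_R=K$, $J_S=L$ and $T=R\bowtie S$. A subset $J\subseteq J_R$ is scindable for $R$ if $R_{|J}$ is scindable. The connective structure of $R$ is $\mathcal{K}_R=\{J\subseteq J_R : J \text{ is not scindable for } R\}$. A connective structure on a set $X$ is a set $\mathcal{K}$ of subsets of $X$ such that for every $\mathcal{I}\subseteq\mathcal{K}$,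 if $\bigcap_{K\in\mathcal{I}}K\neq\emptyset$ then $\bigcup_{K\in\mathcal{I}}K\in\mathcal{K}$ (in particular $\emptyset\in\mathcal{K}$); it is integral if $\{x\}\in\mathcal{K}$ for all $x\in X$. The axiom of choice is not assumed. *)

(* Defs.v *)
Set Implicit Arguments.
Unset Strict Implicit.

Section MultipleRelations.
Variables (I : Type) (E : I -> Type).

(* A (partial) family: a map defined on some subset of I with x_i in E_i.
   The J-families (elements of Z_J) are those defined exactly on J. *)
Definition family := forall i : I, option (E i).

Definition inZ (J : I -> Prop) (x : family) : Prop :=
  forall i, J i <-> x i <> None.

Record mrel := MRel { rdom : I -> Prop; rgraph : family -> Prop }.

Definition wf (R : mrel) : Prop :=
  forall x, rgraph R x -> inZ (rdom R) x.

Definition isRestr (K : I -> Prop) (x y : family) : Prop :=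
  forall i, (K i -> y i = x i) /\ (~ K i -> y i = None).

Definition restr (R : mrel) (K : I -> Prop) : mrel :=
  MRel K (fun y => exists x, rgraph R x /\ isRestr K x y).

Definition rprod (R S : mrel) : mrel :=
  MRel (fun i => rdom R i \/ rdom S i)
       (fun x => inZ (fun i => rdom R i \/ rdom S i) x
                 /\ (exists y, isRestr (rdom R) x y /\ rgraph R y)
                 /\ (exists z, isRestr (rdom S) x z /\ rgraph S z)).

Definition req (R S : mrel) : Prop :=
  (forall i, rdom R i <-> rdom S i) /\ (forall x, rgraph R x <-> rgraph S x).

Definition bipartition (J K L : I -> Prop) : Prop :=
  (exists i, K i) /\ (exists i, L i) /\ (forall i, ~ (K i /\ L i)) /\
  (forall i, J i <-> K i \/ L i).

Definition scindable (T : mrel) : Prop :=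
  exists K L : I -> Prop, bipartition (rdom T) K L /\
    exists R S : mrel, wf R /\ wf S /\
      (forall i, rdom R i <-> K i) /\ (forall i, rdom S i <-> L i) /\
      req T (rprod R S).

Definition scindable_for (R : mrel) (J : I -> Prop) : Prop :=
  scindable (restr R J).

Definition conn_struct (R : mrel) (J : I -> Prop) : Prop :=
  (forall i, J i -> rdom R i) /\ ~ scindable_for R J.

End MultipleRelations.

(* connective structure on the whole set I (empty set required explicitly,
   as in the paper's "in particular ∅ ∈ K") *)
Definition connective_structure (I : Type) (K : (I -> Prop) -> Prop) : Prop :=
  K (fun _ => False) /\
  forall F : (I -> Prop) -> Prop,
    (forall A, F A -> K A) ->
    (exists x, forall A, F A -> A x) ->
    K (fun x => exists A, F A /\ A x).

Definition integral (I : Type) (K : (I -> Prop) -> Prop) : Prop :=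
  forall x : I, K (fun y => y = x).

(* Main.v *)
Require Import Defs.
From Stdlib Require Import Classical ClassicalEpsilon FunctionalExtensionality PropExtensionality.

Section Pf.
Variable I : Type.
Definition EE : I -> Type := fun _ => (I -> Prop) -> Prop.
Variable K : (I -> Prop) -> Prop.

Definition holds (y : family EE) (i : I) (A : I -> Prop) : Prop :=
  exists v, y i = Some v /\ v A.

Definition Gc (J : I -> Prop) (y : family EE) : Prop :=
  inZ J y /\ forall A, K A -> (exists i, A i) -> (forall i, A i -> J i) ->
    ~ (forall i, A i -> holds y i A).

Definition RR : mrel EE := MRel (fun _ => True) (Gc (fun _ => True)).

Lemma Kext : forall J J', (forall i, J i <-> J' i) -> K J -> K J'.
Proof.
  intros J J' H HK.
  assert (J = J') by (extensionality i; apply propositional_extensionality; auto).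
  subst; auto.
Qed.

Lemma holds_restr {D y z A} : isRestr D y z -> (forall i, A i -> D i) ->
  ((forall i, A i -> holds y i A) <-> (forall i, A i -> holds z i A)).
Proof.
  intros HR HAD; split; intros H i Ai; destruct (HR i) as [H1 _];
  specialize (H1 (HAD i Ai)); specialize (H i Ai); unfold holds in *.
  - rewrite H1; auto.
  - rewrite <- H1; auto.
Qed.

Definition restrict (D : I -> Prop) (y : family EE) : family EE :=
  fun i => if excluded_middle_informative (D i) then y i else None.

Lemma restrict_isRestr D y : isRestr D y (restrict D y).
Proof.
  intro i; unfold restrict; destruct excluded_middle_informative; split; intros;
  auto; contradiction.
Qed.

Lemma restr_graph J y : rgraph (restr RR J) y <-> Gc J y.
Proof.
  split.
  - intros [x [[Hx1 Hx2] HR]]. split.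
    + intro i; split.
      * intro Ji. destruct (HR i) as [h _]. rewrite (h Ji). apply Hx1; trivial.
      * intro hy. apply NNPP; intro nJ. destruct (HR i) as [_ h]. apply hy, h, nJ.
    + intros A KA ne AJ Hall. apply (Hx2 A KA ne (fun _ _ => Logic.I)).
      apply (holds_restr HR AJ); auto.
  - intros [Hy1 Hy2].
    exists (fun i : I => if excluded_middle_informative (J i) then y i else (Some (fun _ => False) : option (EE i))).
    split; [split|].
    + intro i; split; intros _; [cbv beta; destruct (excluded_middle_informative (J i));
        [apply (proj1 (Hy1 i)); auto | discriminate] | trivial].
    + intros A KA ne _ Hall.
      destruct (classic (forall i, A i -> J i)) as [AJ|nAJ].
      * apply (Hy2 A KA ne AJ). intros i Ai. destruct (Hall i Ai) as [v [e hv]].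
        destruct (excluded_middle_informative (J i)); [exists v; auto | contradiction (AJ i Ai)].
      * apply not_all_ex_not in nAJ. destruct nAJ as [i hi].
        apply imply_to_and in hi. destruct hi as [Ai nJi].
        destruct (Hall i Ai) as [v [e hv]].
        destruct (excluded_middle_informative (J i)); [contradiction|].
        inversion e; subst v; exact hv.
    + intro i; split; intro h; cbv beta; destruct (excluded_middle_informative (J i)); auto; try contradiction.
      destruct (Hy1 i) as [_ h2]. destruct (y i); [exfalso; apply h, h2; discriminate | reflexivity].
Qed.

Hypothesis Kcs : connective_structure K.
Hypothesis Kint : integral K.

Lemma notK_scind J : ~ K J -> scindable (restr RR J).
Proof.
  intros nKJ. destruct Kcs as [K0 Kun].
  destruct (classic (exists x0, J x0)) as [[x0 Jx0]|nJ].
  2: { exfalso; apply nKJ; apply (Kext (fun _ => False));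
       [intro i; split; [tauto| intro; apply nJ; eauto] | exact K0]. }
  set (F := fun A => K A /\ A x0 /\ forall i, A i -> J i).
  set (C := fun x => exists A, F A /\ A x).
  assert (KC : K C).
  { apply Kun; [intros A [h _]; exact h | exists x0; intros A [_ [h _]]; exact h]. }
  assert (CJ : forall i, C i -> J i) by (intros i [A [[_ [_ h]] Ai]]; auto).
  assert (Cx0 : C x0).
  { exists (fun y => y = x0); split; [split; [apply Kint| split; [reflexivity| intros i ->; auto]] | reflexivity]. }
  set (L := fun i => J i /\ ~ C i).
  assert (JCL : forall i, J i <-> C i \/ L i).
  { intro i; split; [intro Ji; destruct (classic (C i)); [left|right; split]; auto
                    | intros [Ci|[Ji _]]; auto]. }
  assert (Lne : exists i, L i).
  { apply NNPP; intro h. apply nKJ. apply (Kext C); auto.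
    intro i; split; [apply CJ| intro Ji; apply NNPP; intro nC; apply h; exists i; split; auto]. }
  assert (absorb : forall A a, K A -> A a -> C a -> (forall i, A i -> J i) -> forall i, A i -> C i).
  { intros A a KA Aa Ca AJ i Ai.
    set (U := fun x => exists B, (B = A \/ B = C) /\ B x).
    assert (KU : K U).
    { apply Kun; [intros B [-> | ->]; auto | exists a; intros B [-> | ->]; auto]. }
    exists U. split.
    - split; [exact KU| split].
      + exists C; split; auto.
      + intros j [B [[-> | ->] Bj]]; auto.
    - exists A; split; auto. }
  exists C, L. split.
  - split; [exists x0; auto| split; [auto| split]].
    + intros i [Ci [_ nCi]]; auto.
    + exact JCL.
  - exists (MRel C (Gc C)), (MRel L (Gc L)).
    split; [intros x [h _]; exact h|]. split; [intros x [h _]; exact h|].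
    split; [intro; simpl; tauto|]. split; [intro; simpl; tauto|].
    split; [exact JCL|].
    intro y. rewrite restr_graph. simpl. split.
    + intros [HyZ Hy]. split.
      { intro i. split; intro h; [apply (HyZ i); apply JCL; auto | apply JCL; apply (HyZ i); auto]. }
      split; [exists (restrict C y) | exists (restrict L y)];
        (split; [apply restrict_isRestr| split]).
      * intro i; unfold restrict; destruct excluded_middle_informative;
          [split; [intro; apply HyZ; auto | auto] | split; [tauto | intro h; exfalso; apply h; reflexivity]].
      * intros A KA ne AC Hall. apply (Hy A KA ne (fun i Ai => CJ i (AC i Ai))).
        apply (holds_restr (restrict_isRestr C y) AC); auto.
      * intro i; unfold restrict; destruct excluded_middle_informative;
          [split; [intro; apply HyZ; apply l | auto] | split; [tauto | intro h; exfalso; apply h; reflexivity]].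
      * intros A KA ne AL Hall. apply (Hy A KA ne (fun i Ai => proj1 (AL i Ai))).
        apply (holds_restr (restrict_isRestr L y) AL); auto.
    + intros [HyZ [[z [Hz [HzZ Hzc]]] [w [Hw [HwZ Hwc]]]]]. split.
      { intro i. split; intro h; [apply (HyZ i); apply JCL; auto | apply JCL; apply (HyZ i); auto]. }
      intros A KA [a Aa] AJ Hall. destruct (classic (C a)) as [Ca|nCa].
      * assert (AC := absorb A a KA Aa Ca AJ).
        apply (Hzc A KA (ex_intro _ a Aa) AC). apply (holds_restr Hz AC); auto.
      * assert (AL : forall i, A i -> L i).
        { intros i Ai; split; auto. intro Ci. apply nCa. apply (absorb A i KA Ai Ci AJ a Aa). }
        apply (Hwc A KA (ex_intro _ a Aa) AL). apply (holds_restr Hw AL); auto.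
Qed.

Definition mk (J B : I -> Prop) : family EE :=
  fun i => if excluded_middle_informative (J i)
           then Some (fun A => A = J /\ B i) else None.

Lemma mk_inZ J B : inZ J (mk J B).
Proof.
  intro i; unfold mk; destruct excluded_middle_informative; split; intro h;
    try discriminate; try contradiction; auto.
Qed.

Lemma mk_G J B : (exists i, J i /\ ~ B i) -> Gc J (mk J B).
Proof.
  intros [i [Ji nBi]]. split; [apply mk_inZ|].
  intros A KA [a Aa] AJ Hall. destruct (Hall a Aa) as [v [e hv]].
  unfold mk in e; destruct excluded_middle_informative; [|contradiction (AJ a Aa)].
  inversion e; subst v. destruct hv as [eA _]. subst A.
  destruct (Hall i Ji) as [v [e' hv']]. unfold mk in e'.
  destruct excluded_middle_informative; [|contradiction].
  inversion e'; subst v. destruct hv'; auto.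
Qed.

Lemma K_nscind J : K J -> ~ scindable (restr RR J).
Proof.
  intros KJ [P [Q [[[p Pp] [[q Qq] [disj JPQ]]] [R1 [S1 [wR [wS [dR [dS [eqd eqg]]]]]]]]]].
  simpl in JPQ.
  assert (Jp : J p) by (apply JPQ; auto).
  assert (Jq : J q) by (apply JPQ; auto).
  assert (nG : ~ Gc J (mk J (fun _ => True))).
  { intros [_ h]. apply (h J KJ (ex_intro _ p Jp) (fun i Ji => Ji)).
    intros i Ji; exists (fun A => A = J /\ True); unfold mk;
      destruct excluded_middle_informative; [split; auto | contradiction]. }
  assert (G1 : Gc J (mk J P)) by (apply mk_G; exists q; split; auto; intro; apply (disj q); auto).
  assert (G2 : Gc J (mk J Q)) by (apply mk_G; exists p; split; auto; intro; apply (disj p); auto).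
  apply restr_graph, eqg in G1. apply restr_graph, eqg in G2.
  destruct G1 as [_ [[z1 [Hz1 Rz1]] _]]. destruct G2 as [_ [_ [z2 [Hz2 Sz2]]]].
  apply nG. apply restr_graph. apply eqg. simpl. split.
  - intro i. split.
    + intros h. assert (Ji : J i) by (apply JPQ; destruct h; [left; apply dR | right; apply dS]; auto).
      unfold mk; destruct excluded_middle_informative; [discriminate | contradiction].
    + intros h. assert (Ji : J i).
      { unfold mk in h; destruct excluded_middle_informative; auto; contradiction. }
      apply JPQ in Ji. destruct Ji; [left; apply dR | right; apply dS]; auto.
  - split; [exists z1 | exists z2]; split; auto; intro i; split.
    + intro h. destruct (Hz1 i) as [h1 _]. rewrite (h1 h). apply dR in h.
      unfold mk. destruct excluded_middle_informative; [|reflexivity].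
      f_equal. extensionality A. apply propositional_extensionality. tauto.
    + intro h; destruct (Hz1 i) as [_ h2]; exact (h2 h).
    + intro h. destruct (Hz2 i) as [h1 _]. rewrite (h1 h). apply dS in h.
      unfold mk. destruct excluded_middle_informative; [|reflexivity].
      f_equal. extensionality A. apply propositional_extensionality. tauto.
    + intro h; destruct (Hz2 i) as [_ h2]; exact (h2 h).
Qed.

End Pf.

Theorem mainTheorem1 (I : Type) :
  exists E : I -> Type,
    (forall i, inhabited (E i)) /\
    forall K : (I -> Prop) -> Prop,
      connective_structure K -> integral K ->
      exists R : mrel E, wf R /\ forall J : I -> Prop, conn_struct R J <-> K J.
Proof.
  exists (EE I). split; [intro; constructor; exact (fun _ => False)|].
  intros K Kcs Kint. exists (@RR I K). split; [intros x [h _]; exact h|].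
  intro J; split.
  - intros [_ h]; apply NNPP; intro nK; apply h; apply notK_scind; auto.
  - intro KJ; split; [intros; exact Logic.I | apply K_nscind; auto].
Qed.
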